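(* Let $L\ge2$, $k\ge2$, $\Lambda=\{1,\dots,L\}^2$, $\widetilde\Lambda=\{L\}\times\{1,\dots,L\}$, $\mathbf v=((1,1),(L,1))\in\Lambda^2$, and $W_k=\{\mathbf v\mathbf u:\mathbf u\in\widetilde\Lambda^{k-2}\}\subset\Lambda^k$ (concatenation of strings). Let $\lambda_1,\lambda_2,\dots$ be independent random variables taking values in $\Lambda$, and let $A_m$ be the event $(\lambda_m,\dots,\lambda_{m+k-1})\in W_k$. Then for every finite $I\subset\mathbb{N}$, \[ \mathbb{P}\Bigl[\bigcap_{i\in I}A_i^c\Bigr]\le\prod_{i\in I}\mathbb{P}[A_i^c]. \] *)

(* Defs.v *)
From HB Require Import structures.
From mathcomp Require Import all_boot all_order all_algebra.
From mathcomp Require Import all_classical all_reals all_analysis.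
Set Implicit Arguments. Unset Strict Implicit. Unset Printing Implicit Defensive.
Import Order.TTheory GRing.Theory Num.Theory.
Local Open Scope classical_set_scope.
Local Open Scope ereal_scope.

Definition Lam (L : nat) : set (nat * nat) :=
  [set x | (1 <= x.1 <= L)%N /\ (1 <= x.2 <= L)%N].

Definition Lamt (L : nat) : set (nat * nat) :=
  [set x | x.1 = L /\ (1 <= x.2 <= L)%N].

Definition vv (L : nat) : seq (nat * nat) := [:: (1, 1); (L, 1)]%N.

Definition Wk (L k : nat) : set (seq (nat * nat)) :=
  [set s | exists u : seq (nat * nat),
      size u = (k - 2)%N /\ (forall x, x \in u -> Lamt L x) /\ s = vv L ++ u].

Definition Aev (T : Type) (L k : nat) (lam : nat -> T -> nat * nat) (m : nat)
  : set T :=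
  [set w | Wk L k [seq lam (m + j)%N w | j <- iota 0 k]].

Definition mutually_independent_discrete d (T : measurableType d)
  (R : realType) (P : probability T R) (lam : nat -> T -> nat * nat) : Prop :=
  forall (J : seq nat) (a : nat -> nat * nat), uniq J ->
    P (\big[setI/setT]_(j <- J) (lam j @^-1` [set a j]))
    = \prod_(j <- J) P (lam j @^-1` [set a j]).

(* Main.v *)
Require Import Defs.
From HB Require Import structures.
From mathcomp Require Import all_boot all_order all_algebra.
From mathcomp Require Import all_classical all_reals all_analysis.
From mathcomp Require Import zify ring lra.
Import Order.TTheory GRing.Theory Num.Theory.
Local Open Scope classical_set_scope.
Local Open Scope ereal_scope.

Section Aux.
Variables (d : measure_display) (T : measurableType d) (R : realType)
  (P : probability T R) (L : nat) (lam : nat -> T -> nat * nat).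
Hypothesis hLam : forall m w, Lam L (lam m w).
Hypothesis hmeas : forall m x, measurable (lam m @^-1` [set x]).
Hypothesis hind : mutually_independent_discrete P lam.
Variable k : nat.
Hypothesis hL : (2 <= L)%N.
Hypothesis hk : (2 <= k)%N.

Definition pr (A : set T) : R := fine (P A).

Lemma prE A : measurable A -> P A = (pr A)%:E.
Proof. by move=> mA; rewrite /pr fineK // fin_num_measure. Qed.

Local Open Scope ring_scope.

Lemma pr_ge0 A : 0 <= pr A.
Proof. by rewrite /pr fine_ge0 // measure_ge0. Qed.

Lemma prU A B : measurable A -> measurable B -> A `&` B = set0 ->
  pr (A `|` B) = pr A + pr B.
Proof.
move=> mA mB AB; rewrite /pr measureU //; apply: fineD; exact: fin_num_measure.
Qed.

Lemma pr_le A B : measurable A -> measurable B -> A `<=` B -> pr A <= pr B.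
Proof.
move=> mA mB AB; rewrite -lee_fin -(prE _ mA) -(prE _ mB).
by apply: le_measure => //; rewrite inE.
Qed.

Lemma prT : pr setT = 1.
Proof. by rewrite /pr probability_setT. Qed.

Lemma pr0 : pr set0 = 0.
Proof. by rewrite /pr measure0. Qed.

Lemma prC A : measurable A -> pr (~` A) = 1 - pr A.
Proof.
move=> mA; rewrite -prT -(setUv A) prU ?setICr //; last exact: measurableC.
by rewrite addrAC subrr add0r.
Qed.

Lemma bigI_meas (s : seq nat) (Pr : pred nat) (F : nat -> set T) :
  (forall i, measurable (F i)) -> measurable (\big[setI/setT]_(i <- s | Pr i) F i).
Proof.
move=> mF; apply: (big_ind (fun X => measurable X)) => //.
by move=> x y mx my; apply: measurableI.
Qed.

Lemma in_bigcapP (s : seq nat) (Pr : pred nat) (F : nat -> set T) w :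
  (\big[setI/setT]_(i <- s | Pr i) F i) w <-> (forall i, i \in s -> Pr i -> F i w).
Proof.
elim: s => [|i s IH]; first by rewrite big_nil; split => // _ i; rewrite in_nil.
rewrite big_cons; case: ifP => Pi.
  split.
    move=> [Fi /IH H] j; rewrite in_cons => /orP[/eqP->//|js]; exact: H.
  move=> H; split; first by apply: H => //; rewrite mem_head.
  by apply/IH => j js; apply: H; rewrite in_cons js orbT.
split.
  move=> /IH H j; rewrite in_cons => /orP[/eqP->|js]; first by rewrite Pi.
  exact: H.
by move=> H; apply/IH => j js; apply: H; rewrite in_cons js orbT.
Qed.

Lemma pr_bigU (s : seq (nat * nat)) (F : nat * nat -> set T) : uniq s ->
  (forall x, measurable (F x)) -> (forall x y, x != y -> F x `&` F y = set0) ->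
  pr (\big[setU/set0]_(x <- s) F x) = \sum_(x <- s) pr (F x).
Proof.
move=> + mF dF; elim: s => [|x s IH]; first by rewrite !big_nil pr0.
move=> /= /andP[xs us]; rewrite !big_cons prU ?IH //.
- apply: (big_ind (fun X => measurable X)) => //.
  by move=> ? ? ? ?; apply: measurableU.
- rewrite big_seq; apply: (big_ind (fun X => F x `&` X = set0)).
  + exact: setI0.
  + by move=> X Y hX hY; rewrite setIUr hX hY setU0.
  + by move=> y ys; apply: dF; apply: contraNneq xs => ->.
Qed.

Definition lamL : seq (nat * nat) := [seq (a, b) | a <- iota 1 L, b <- iota 1 L].

Lemma lamL_uniq : uniq lamL.
Proof.
apply: allpairs_uniq; rewrite ?iota_uniq //.
by move=> [a b] [a' b'] _ _ /= [-> ->].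
Qed.

Lemma lamL_mem x : Lam L x -> x \in lamL.
Proof.
case: x => a b [/= /andP[a1 aL] /andP[b1 bL]].
apply/allpairsP; exists (a, b); rewrite !mem_iota /=; split => //;
by rewrite ?a1 ?b1 !add1n !ltnS ?aL ?bL.
Qed.

Definition pt j x : set T := lam j @^-1` [set x].

Lemma decomp E j : E = \big[setU/set0]_(x <- lamL) (pt j x `&` E).
Proof.
apply/seteqP; split.
  move=> w Ew; rewrite (big_rem (lam j w)) /=; last exact: lamL_mem.
  by left.
apply: (big_ind (fun X => X `<=` E)) => //.
  by move=> X Y hX hY v [/hX|/hY].
Qed.

Lemma pr_decomp E j : measurable E -> pr E = \sum_(x <- lamL) pr (pt j x `&` E).
Proof.
move=> mE; rewrite {1}(decomp E j) pr_bigU //.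
- exact: lamL_uniq.
- by move=> x; apply: measurableI => //; apply: hmeas.
- move=> x y xy; apply/seteqP; split => w //= [[hx _] [hy _]].
  by move: xy; rewrite /pt /= in hx hy; rewrite -hx -hy eqxx.
Qed.

Definition Ev (f : (nat -> nat * nat) -> Prop) : set T := [set w | f (fun j => lam j w)].
Definition dep (J : seq nat) (f : (nat -> nat * nat) -> Prop) :=
  forall h h', (forall j, j \in J -> h j = h' j) -> f h -> f h'.
Definition upd (h : nat -> nat * nat) j x := fun i => if i == j then x else h i.

Lemma Ev_upd f j x : pt j x `&` Ev f = pt j x `&` Ev (fun h => f (upd h j x)).
Proof.
apply/seteqP; split => w [hx H]; split => //;
  have e : upd (fun i => lam i w) j x = (fun i => lam i w)
    by apply: funext => i; rewrite /upd; case: eqP => // ->.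
  by rewrite /Ev /= e.
by move: H; rewrite /Ev /= e.
Qed.

Lemma dep_upd J j x f : dep (j :: J) f -> dep J (fun h => f (upd h j x)).
Proof.
move=> df h h' e; apply: df => i; rewrite in_cons /upd.
by case: eqP => //= _ iJ; rewrite e.
Qed.

Lemma dep_nil f : dep [::] f -> Ev f = setT \/ Ev f = set0.
Proof.
move=> df; case: (pselect (f (fun _ => (0, 0)%N))) => H; [left|right];
  apply/seteqP; split => w //=.
- by move=> _; apply: (df _ _ _ H).
- by move=> /(df _ (fun _ => (0, 0)%N)) H2; apply: H; apply: H2.
Qed.

Lemma Ev_meas J f : dep J f -> measurable (Ev f).
Proof.
elim: J f => [|j J IH] f df.
  by case: (dep_nil _ df) => ->.
rewrite (decomp (Ev f) j); apply: (big_ind (fun X => measurable X)) => //.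
  by move=> ? ? ? ?; apply: measurableU.
move=> x _; rewrite Ev_upd; apply: measurableI; first exact: hmeas.
exact: (IH _ (dep_upd _ _ x _ df)).
Qed.
Arguments Ev_meas {J f}.

Definition atom (K : seq nat) (a : nat -> nat * nat) : set T :=
  \big[setI/setT]_(j <- K) (lam j @^-1` [set a j]).

Lemma atom_meas K a : measurable (atom K a).
Proof. by apply: bigI_meas => i; apply: hmeas. Qed.

Lemma pr_atom_cons j K a : uniq (j :: K) ->
  pr (atom (j :: K) a) = pr (pt j (a j)) * pr (atom K a).
Proof.
move=> u; have := hind (j :: K) a u; rewrite !big_cons.
have /= /andP[_ uK] := u.
rewrite -(hind K a uK) => H.
rewrite /pr /atom big_cons H fineM //; apply: fin_num_measure => //.
exact: atom_meas.
Qed.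

Lemma atom_upd K a j x : j \notin K -> atom K (upd a j x) = atom K a.
Proof.
move=> jK; apply: eq_big_seq => i iK; rewrite /upd.
by case: eqP => // eij; move: jK; rewrite -eij iK.
Qed.

Lemma indepA J : uniq J -> forall f, dep J f -> forall K a, uniq K ->
  (forall i, i \in K -> i \notin J) ->
  pr (atom K a `&` Ev f) = pr (atom K a) * pr (Ev f).
Proof.
elim: J => [|j J IH] uJ f df K a uK dK.
  by case: (dep_nil _ df) => ->; rewrite ?setIT ?setI0 ?prT ?pr0 ?mulr1 ?mulr0.
have /= /andP[jJ uJ0] := uJ.
have mf : measurable (Ev f) by exact: (Ev_meas df).
have key : forall K a, uniq K -> (forall i, i \in K -> i \notin j :: J) ->
  pr (atom K a `&` Ev f) = pr (atom K a) *
    \sum_(x <- lamL) pr (pt j x) * pr (Ev (fun h => f (upd h j x))).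
  move=> K' a' uK' dK'.
  rewrite (pr_decomp _ j); last by apply: measurableI => //; exact: atom_meas.
  rewrite big_distrr; apply: eq_bigr => x _.
  have jK' : j \notin K'.
    by apply/negP => /dK'; rewrite mem_head.
  have e : pt j x `&` (atom K' a' `&` Ev f) =
      atom (j :: K') (upd a' j x) `&` Ev (fun h => f (upd h j x)).
    rewrite /atom big_cons -/(atom K' (upd a' j x)) atom_upd //.
    rewrite /upd eqxx -/(pt j x).
    by rewrite setICA Ev_upd setICA setIA.
  rewrite e IH //.
  - rewrite pr_atom_cons /=; last by rewrite jK'.
    have -> : upd a' j x j = x by rewrite /upd eqxx.
    by rewrite atom_upd // -mulrA mulrCA.
  - exact: dep_upd.
  - by rewrite /= jK'.
  - move=> i; rewrite in_cons => /orP[/eqP->//|iK'].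
    by have := dK' _ iK'; rewrite in_cons negb_or => /andP[].
rewrite key //.
have H0 : forall i, i \in [::] -> i \notin j :: J by [].
have := key [::] a erefl H0.
by rewrite /atom big_nil setTI prT mul1r => <-.
Qed.
Arguments indepA {J} _ {f}.

Lemma decompEv j J f : uniq (j :: J) -> dep (j :: J) f ->
  pr (Ev f) = \sum_(x <- lamL) pr (pt j x) * pr (Ev (fun h => f (upd h j x))).
Proof.
move=> u df; have /= /andP[jJ uJ] := u.
rewrite (pr_decomp _ j); last exact: (Ev_meas df).
apply: eq_bigr => x _; rewrite Ev_upd.
have := indepA uJ (dep_upd _ _ x _ df) [:: j] (fun _ => x) erefl.
rewrite /atom big_cons big_nil setIT => -> //.
by move=> i; rewrite inE => /eqP->.
Qed.
Arguments decompEv {j J f}.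

Lemma indep2 J : uniq J -> forall f, dep J f -> forall J' g, uniq J' -> dep J' g ->
  (forall i, i \in J -> i \notin J') ->
  pr (Ev f `&` Ev g) = pr (Ev f) * pr (Ev g).
Proof.
elim: J => [|j J IH] uJ f df J' g uJ' dg dJ.
  by case: (dep_nil _ df) => ->; rewrite ?setTI ?set0I ?prT ?pr0 ?mul1r ?mul0r.
have /= /andP[jJ uJ0] := uJ.
have jJ' : j \notin J' by apply: dJ; rewrite mem_head.
rewrite (pr_decomp _ j); last first.
  by apply: measurableI; [exact: (Ev_meas df) | exact: (Ev_meas dg)].
rewrite (decompEv uJ df) big_distrl; apply: eq_bigr => x _.
pose g' := fun h : nat -> nat * nat => h j = x /\ g h.
have eg : Ev g' = pt j x `&` Ev g by apply/seteqP; split => w.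
have e : pt j x `&` (Ev f `&` Ev g) = Ev (fun h => f (upd h j x)) `&` Ev g'.
  by rewrite eg setIA Ev_upd -setIA setICA setIA.
rewrite e (IH uJ0 _ (dep_upd _ _ x _ df) (j :: J') g') //.
- rewrite eg.
  have := indepA uJ' dg [:: j] (fun _ => x) erefl.
  rewrite /atom big_cons big_nil setIT => -> //; last first.
    by move=> i; rewrite inE => /eqP->.
  by rewrite mulrCA mulrA.
- by rewrite /= jJ' uJ'.
- move=> h h' e' [hj gh]; split; first by rewrite -e' ?mem_head.
  by apply: (dg h) => // i iJ'; apply: e'; rewrite in_cons iJ' orbT.
- move=> i iJ; rewrite in_cons negb_or dJ ?andbT; last by rewrite in_cons iJ orbT.
  by apply/eqP => eij; move: jJ; rewrite -eij iJ.
Qed.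
Arguments indep2 {J} _ {f} _ {J' g}.

Definition fA i (h : nat -> nat * nat) := Wk L k [seq h (i + j)%N | j <- iota 0 k].

Lemma AevE i : Aev L k lam i = Ev (fA i).
Proof. by []. Qed.

Lemma dep_A i : dep (iota i k) (fA i).
Proof.
move=> h h' e; rewrite /fA.
suff -> : [seq h (i + j)%N | j <- iota 0 k] = [seq h' (i + j)%N | j <- iota 0 k] by [].
apply/eq_in_map => j.
rewrite mem_iota add0n => /andP[_ jk]; apply: e.
by rewrite mem_iota leq_addr ltn_add2l.
Qed.

Lemma Aev_meas i : measurable (Aev L k lam i).
Proof. by rewrite AevE; apply: (Ev_meas (dep_A i)). Qed.

Lemma Wk_nth s t : Wk L k s ->
  nth (0, 0)%N s 0 = (1, 1)%N /\ ((1 <= t < k)%N -> (nth (0, 0)%N s t).1 = L).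
Proof.
case=> u [su [uL ->]]; split => //.
case: t => [//|[|t]] /andP[_ tk] //=.
have tu : (t < size u)%N by rewrite su; lia.
by case: (uL _ (mem_nth (0, 0)%N tu)).
Qed.
Arguments Wk_nth {s}.

Lemma A_lam i t w : Aev L k lam i w -> (t < k)%N ->
  lam (i + t)%N w = nth (0, 0)%N [seq lam (i + j)%N w | j <- iota 0 k] t.
Proof. by move=> _ tk; rewrite (nth_map 0%N) ?size_iota // nth_iota. Qed.
Arguments A_lam {i} t {w}.

Lemma A_disj i m w : (i < m < i + k)%N -> Aev L k lam i w -> Aev L k lam m w -> False.
Proof.
move=> /andP[im mik] Ai Am.
have k0 : (0 < k)%N by lia.
have h1 := A_lam 0 Am k0; rewrite addn0 in h1.
have [h1' _] := Wk_nth 0 Am; rewrite -h1 in h1'.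
have tk : (m - i < k)%N by lia.
have h2 := A_lam (m - i) Ai tk; rewrite subnKC ?(ltnW im) // in h2.
have [_ h2'] := Wk_nth (m - i) Ai.
have := h2' ltac:(lia); rewrite -h2 h1' /= => L1.
by move: hL; rewrite -L1.
Qed.

Lemma main_sorted s : uniq s -> sorted geq s ->
  pr (\big[setI/setT]_(i <- s) ~` Aev L k lam i) <= \prod_(i <- s) pr (~` Aev L k lam i).
Proof.
have mA : forall i, measurable (Aev L k lam i).
  by move=> i; rewrite AevE; apply: (Ev_meas (dep_A i)).
have mB0 : forall s' (Pr : pred nat), measurable (\big[setI/setT]_(i <- s' | Pr i) ~` Aev L k lam i).
  by move=> s' Pr; apply: bigI_meas => i; apply: measurableC.
elim: s => [|m s IH] /=; first by rewrite !big_nil prT.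
move=> /andP[ms us] ps.
have ss := path_sorted ps.
have tr : transitive geq by move=> y x z h1 h2; exact: leq_trans h2 h1.
have /allP lt := order_path_min tr ps.
have ltm : forall i, i \in s -> (i < m)%N.
  move=> i iS; rewrite ltn_neqAle andbC; have -> : (i <= m)%N := lt i iS.
  by apply/eqP => eim; move: ms; rewrite -eim iS.
rewrite !big_cons.
set A := Aev L k lam m.
set B := \big[setI/setT]_(i <- s) ~` Aev L k lam i.
set B' := \big[setI/setT]_(i <- s | (i + k <= m)%N) ~` Aev L k lam i.
have mB : measurable B by exact: mB0.
have mB' : measurable B' by exact: mB0.
have hBB' : B `<=` B'.
  move=> w /in_bigcapP H; apply/in_bigcapP => i iS _; exact: H.
have hAB : A `&` B = A `&` B'.
  apply/seteqP; split => w [Aw Bw]; split => //; first exact: hBB'.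
  apply/in_bigcapP => i iS _ Ai; move/in_bigcapP: Bw => Bw.
  case: (leqP (i + k) m) => ik; first exact: (Bw i iS ik).
  by apply: (@A_disj i m w) => //; rewrite ltm.
pose fB := fun h : nat -> nat * nat =>
  forall i, i \in s -> (i + k <= m)%N -> ~ fA i h.
have eB' : B' = Ev fB.
  apply/seteqP; split => w.
    by move=> /in_bigcapP H i iS ik; apply: (H i iS ik).
  by move=> H; apply/in_bigcapP => i iS ik; apply: (H i iS ik).
have dB : dep (iota 0 m) fB.
  move=> h h' e H i iS ik hW; apply: (H i iS ik); apply: (dep_A i h') hW.
  move=> j; rewrite mem_iota => /andP[ij jik]; rewrite e // mem_iota; lia.
have hAB' : pr (A `&` B') = pr A * pr B'.
  rewrite setIC eB' /A AevE (indep2 (iota_uniq 0 m) dB (iota_uniq m k) (dep_A m)).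
    by rewrite mulrC.
  by move=> i; rewrite !mem_iota => ?; apply/negP; lia.
have hsplit : pr B = pr (A `&` B) + pr (~` A `&` B).
  have mA' := mA m.
  rewrite -(prU (A `&` B) (~` A `&` B)).
  - by rewrite -setIUl setUv setTI.
  - exact: measurableI.
  - by apply: measurableI => //; apply: measurableC.
  - by rewrite setIACA setICr set0I.
have hle : pr B <= pr B' by apply: pr_le.
have hIH := IH us ss.
have hA0 := pr_ge0 A.
have hC : pr (~` A) = 1 - pr A := prC _ (mA m).
have hC0 := pr_ge0 (~` A).
have h1 : 0 <= pr A * (pr B' - pr B) by apply: mulr_ge0; lra.
have h2 : 0 <= pr (~` A) * (\prod_(i <- s) pr (~` Aev L k lam i) - pr B)
  by apply: mulr_ge0; lra.
rewrite hAB hAB' in hsplit.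
nra.
Qed.

End Aux.

Theorem lemma4p15 (d : measure_display) (T : measurableType d) (R : realType)
  (P : probability T R) (L k : nat) (lam : nat -> T -> nat * nat) :
  (2 <= L)%N -> (2 <= k)%N ->
  (forall m w, Lam L (lam m w)) ->
  (forall m x, measurable (lam m @^-1` [set x])) ->
  mutually_independent_discrete P lam ->
  forall I : seq nat, uniq I ->
    P (\big[setI/setT]_(i <- I) ~` Aev L k lam i)
    <= \prod_(i <- I) P (~` Aev L k lam i).
Proof.
move=> hL hk hLam hmeas hind I uI.
have mA : forall i, measurable (Aev L k lam i).
  by move=> i; exact: (Aev_meas _ _ _ _ hLam hmeas k i).
have pI : perm_eq (sort geq I) I by rewrite perm_sort.
rewrite -!(perm_big _ pI).
rewrite (prE _ _ _ P); last by apply: bigI_meas => i; apply: measurableC.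
rewrite (eq_bigr (fun i => (pr _ _ _ P (~` Aev L k lam i))%:E)); last first.
  by move=> i _; apply: prE; apply: measurableC.
rewrite prodEFin lee_fin.
apply: (main_sorted _ _ _ _ _ _ hLam hmeas hind _ hL hk).
  by rewrite sort_uniq.
apply: sort_sorted => a b; exact: leq_total.
Qed.
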